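(* Let $C\subseteq\mathbb{R}^n$ be a full-dimensional closed convex cone with lineality space $L$, and let $S\subseteq\mathbb{R}^n$ be closed. Then $C$ is maximal $S$-free if and only if $C\cap L^\perp$ is maximal $\operatorname{cl}(\operatorname{proj}_{L^\perp}S)$-free (as a subset of the space $L^\perp$).
   Context: A convex set $C$ is $S$-free if $\operatorname{int}(C)\cap S=\emptyset$ and maximal $S$-free if it is $S$-free and no $S$-free convex set strictly contains it; for subsets of the subspace $L^\perp$, interiors are taken relative to $L^\perp$ and competing convex sets are subsets of $L^\perp$. $\operatorname{proj}_{L^\perp}$ is the orthogonal projection onto $L^\perp$ and $\operatorname{cl}$ denotes closure. *)

(* Defs.v *)
From HB Require Import structures.
From mathcomp Require Import all_boot all_order all_algebra.
From mathcomp Require Import all_classical all_reals all_analysis.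
Import numFieldTopology.Exports numFieldNormedType.Exports.
Set Implicit Arguments. Unset Strict Implicit. Unset Printing Implicit Defensive.
Import Order.TTheory GRing.Theory Num.Theory.
Local Open Scope classical_set_scope.
Local Open Scope ring_scope.

(* Ambient space R^n is modelled as row vectors 'rV[R]_n, with its
   canonical (normed) topology from MathComp-Analysis. *)

Section Defs.
Variables (R : realType) (n : nat).
Local Notation V := 'rV[R]_n.

Definition dotv (u v : V) : R := \sum_(i < n) u ord0 i * v ord0 i.

Definition convex_set_rV (A : set V) : Prop :=
  forall x y (t : R), A x -> A y -> 0 <= t <= 1 -> A (t *: x + (1 - t) *: y).

Definition cone_rV (A : set V) : Prop :=
  forall x (t : R), A x -> 0 <= t -> A (t *: x).

Definition lineality (C : set V) : set V :=
  [set d | forall x (t : R), C x -> C (x + t *: d)].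

Definition perp (L : set V) : set V :=
  [set y | forall x, L x -> dotv x y = 0].

Definition orth_proj (W : set V) (x : V) : V :=
  xget 0 [set y | W y /\ forall z, W z -> dotv (x - y) z = 0].

Definition S_free (S C : set V) : Prop :=
  convex_set_rV C /\ interior C `&` S = set0.

Definition maximal_S_free (S C : set V) : Prop :=
  S_free S C /\
  forall K, S_free S K -> C `<=` K -> K = C.

Definition rel_interior (W A : set V) : set V :=
  [set x | W x /\ exists N, nbhs x N /\ N `&` W `<=` A].

Definition S_free_in (W S C : set V) : Prop :=
  C `<=` W /\ convex_set_rV C /\ rel_interior W C `&` S = set0.

Definition maximal_S_free_in (W S C : set V) : Prop :=
  S_free_in W S C /\
  forall K, S_free_in W S K -> C `<=` K -> K = C.

End Defs.

(* Main.v *)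
Require Import Defs.
From HB Require Import structures.
From mathcomp Require Import all_boot all_order all_algebra.
From mathcomp Require Import all_classical all_reals all_analysis.
Import numFieldTopology.Exports numFieldNormedType.Exports.
Import Order.TTheory GRing.Theory Num.Theory.
Local Open Scope classical_set_scope.
Local Open Scope ring_scope.

Section LA.
Variables (R : realType) (n : nat).
Local Notation V := 'rV[R]_n.

Lemma dotvE (u v : V) : dotv u v = (u *m v^T) 0 0.
Proof. by rewrite /dotv !mxE; apply: eq_bigr => j _; rewrite mxE. Qed.

Lemma mxBBT0 p q (B : 'M[R]_(p, q)) : B *m B^T = 0 -> B = 0.
Proof.
move=> H; apply/matrixP => i j; rewrite mxE.
have := congr1 (fun M : 'M[R]_p => M i i) H; rewrite !mxE => /eqP.
rewrite psumr_eq0 => [/allP /(_ j) |k _]; last by rewrite mxE -expr2 sqr_ge0.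
by rewrite mem_index_enum mxE mulf_eq0 orbb => /(_ isT) /eqP.
Qed.

Lemma dotvC (u v : V) : dotv u v = dotv v u.
Proof. by rewrite /dotv; apply: eq_bigr => j _; rewrite mulrC. Qed.

Lemma dotvDl (u u' v : V) : dotv (u + u') v = dotv u v + dotv u' v.
Proof. by rewrite /dotv -big_split; apply: eq_bigr => j _; rewrite mxE mulrDl. Qed.

Lemma dotvZl a (u v : V) : dotv (a *: u) v = a * dotv u v.
Proof. by rewrite /dotv mulr_sumr; apply: eq_bigr => j _; rewrite mxE mulrA. Qed.

Lemma dotvDr (u v v' : V) : dotv u (v + v') = dotv u v + dotv u v'.
Proof. by rewrite dotvC dotvDl !(dotvC u). Qed.

Lemma dotvZr a (u v : V) : dotv u (a *: v) = a * dotv u v.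
Proof. by rewrite dotvC dotvZl dotvC. Qed.

Lemma dotvNl (u v : V) : dotv (- u) v = - dotv u v.
Proof. by rewrite -scaleN1r dotvZl mulN1r. Qed.

Lemma dotvNr (u v : V) : dotv u (- v) = - dotv u v.
Proof. by rewrite -scaleN1r dotvZr mulN1r. Qed.

Lemma dotv_eq0 (v : V) : dotv v v = 0 -> v = 0.
Proof.
rewrite dotvE => H; apply: mxBBT0; apply/matrixP => i j.
by rewrite !ord1 H mxE.
Qed.

Variable L : set V.
Hypothesis L0 : L 0.
Hypothesis LD : forall x y, L x -> L y -> L (x + y).
Hypothesis LZ : forall (a : R) x, L x -> L (a *: x).

Local Notation W := (perp L).

Lemma W0 : W 0.
Proof. by move=> x _; rewrite /dotv big1 // => j _; rewrite mxE mulr0. Qed.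
Lemma WD x y : W x -> W y -> W (x + y).
Proof. by move=> Hx Hy z Lz; rewrite dotvDr Hx // Hy // addr0. Qed.
Lemma WZ a x : W x -> W (a *: x).
Proof. by move=> Hx z Lz; rewrite dotvZr Hx // mulr0. Qed.
Lemma WN x : W x -> W (- x).
Proof. by move=> Hx; rewrite -scaleN1r; apply: WZ. Qed.
Lemma WB x y : W x -> W y -> W (x - y).
Proof. by move=> Hx Hy; apply: WD => //; apply: WN. Qed.
Lemma LN x : L x -> L (- x).
Proof. by move=> Hx; rewrite -scaleN1r; apply: LZ. Qed.
Lemma LB x y : L x -> L y -> L (x - y).
Proof. by move=> Hx Hy; apply: LD => //; apply: LN. Qed.

Lemma LW0 v : L v -> W v -> v = 0.
Proof. by move=> Lv Wv; apply: dotv_eq0; apply: Wv. Qed.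


Definition InvL (A : 'M[R]_n) := forall w : V, (w <= A)%MS -> L w.

Lemma InvL_add (A : 'M[R]_n) v : InvL A -> L v -> InvL (A + v)%MS.
Proof.
move=> IA Lv w /sub_addsmxP [[u u']] /= ->.
apply: LD; first by apply: IA; apply: submxMl.
by rewrite [u']mx11_scalar mul_scalar_mx; apply: LZ.
Qed.

Lemma basis_exists : exists A : 'M[R]_n, InvL A /\ forall v, L v -> (v <= A)%MS.
Proof.
suff H : forall k, (exists A : 'M[R]_n, InvL A /\ forall v, L v -> (v <= A)%MS)
  \/ (exists A : 'M[R]_n, InvL A /\ (k <= \rank A)%N).
  case: (H n.+1) => // -[A [_ HA]].
  by have := rank_leq_col A; rewrite leqNgt => /negP; rewrite HA.
elim=> [|k [IH|[A [IA HA]]]]; [right | by left | ].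
  by exists 0; split => // w; rewrite submx0 => /eqP ->.
case: (pselect (forall v, L v -> (v <= A)%MS)) => [Hf|Hnf]; first by left; exists A.
have [v [Lv nv]] : exists v, L v /\ ~~ (v <= A)%MS.
  apply: contra_notP Hnf => H v Lv; apply/negPn/negP => nv; apply: H; exists v.
  by split=> //; apply/negP.
right; exists (A + v)%MS; split; first exact: InvL_add.
have sA := addsmxSl A v.
have := mxrank_leqif_sup sA => /leqifP.
case: ifP => [/(submx_trans (addsmxSr A v))|_ lt]; first by rewrite (negbTE nv).
exact: leq_ltn_trans lt.
Qed.


Lemma rank_AAT (A : 'M[R]_n) : \rank (A *m A^T) = \rank A.
Proof.
have kK : (kermx (A *m A^T) <= kermx A)%MS.
  apply/sub_kermxP; apply: mxBBT0.
  by rewrite trmx_mul mulmxA -(mulmxA _ A) mulmx_ker mul0mx.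
have Kk : (kermx A <= kermx (A *m A^T))%MS.
  by apply/sub_kermxP; rewrite mulmxA mulmx_ker mul0mx.
have := anti_leq (introT andP (conj (mxrankS kK) (mxrankS Kk))).
rewrite !mxrank_ker => /(congr1 (subn n)).
by rewrite !subKn // rank_leq_row.
Qed.


Lemma decomp (x : V) : exists l, L l /\ W (x - l).
Proof.
have [A [IA FA]] := basis_exists.
have sub1 : (A^T <= A *m A^T)%MS.
  have := mxrank_leqif_sup (submxMl A A^T) => /leqifP.
  by rewrite rank_AAT mxrank_tr ltnn; case: ifP.
have /submxP [u Hu] : (x *m A^T <= A *m A^T)%MS.
  exact: submx_trans (submxMl x A^T) sub1.
exists (u *m A); split; first by apply: IA; apply: submxMl.
move=> z /FA /submxP [z' ->].
have E : A *m (x - u *m A)^T = 0.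
  by rewrite -[A in A *m _]trmxK -trmx_mul mulmxBl -mulmxA Hu subrr trmx0.
by rewrite dotvE -mulmxA E mulmx0 mxE.
Qed.


Local Notation P := (orth_proj W).

Lemma proj_spec x : W (P x) /\ L (x - P x).
Proof.
have [l [Ll Wxl]] := decomp x.
have Qw : W (x - l) /\ forall z, W z -> dotv (x - (x - l)) z = 0.
  by split=> // z Wz; rewrite opprB addrCA subrr addr0; apply: Wz.
have HQ : exists y, [set y | W y /\ forall z, W z -> dotv (x - y) z = 0] y.
  by exists (x - l).
have [Wy Hy] := xgetPex 0 HQ.
rewrite /orth_proj; set y := xget _ _ in Wy Hy *.
have d0 : x - l - y = 0.
  have Wd : W (x - l - y) by apply: WB.
  apply: dotv_eq0; rewrite {1}(_ : x - l - y = (x - y) - l); last by rewrite addrAC.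
  by rewrite dotvDl Hy // dotvNl Wd // oppr0 addr0.
have -> : y = x - l by apply/eqP; rewrite eq_sym -subr_eq0 d0.
by split => //; rewrite opprB addrCA subrr addr0.
Qed.

Lemma proj_uniq x y : W y -> L (x - y) -> P x = y.
Proof.
move=> Wy Lxy; have [Wp Lp] := proj_spec x.
apply/eqP; rewrite -subr_eq0; apply/eqP; apply: LW0; last exact: WB.
have -> : P x - y = (x - y) - (x - P x) by rewrite opprB (addrC (x - y)) addrA subrK.
exact: LB.
Qed.

Lemma projW y : W y -> P y = y.
Proof. by move=> Wy; apply: proj_uniq; rewrite // subrr. Qed.

Lemma projD x y : P (x + y) = P x + P y.
Proof.
have [Wx Lx] := proj_spec x; have [Wy Ly] := proj_spec y.
apply: proj_uniq; first exact: WD.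
by rewrite opprD addrACA; apply: LD.
Qed.

Lemma projZ a x : P (a *: x) = a *: P x.
Proof.
have [Wx Lx] := proj_spec x.
apply: proj_uniq; first exact: WZ.
by rewrite -scalerBr; apply: LZ.
Qed.

Lemma proj0 : P 0 = 0.
Proof. by have := projZ 0 0; rewrite !scale0r. Qed.

Lemma projB x y : P (x - y) = P x - P y.
Proof. by rewrite projD -scaleN1r projZ scaleN1r. Qed.

Lemma proj_sum (I : Type) (r : seq I) (F : I -> V) :
  P (\sum_(i <- r) F i) = \sum_(i <- r) P (F i).
Proof.
elim: r => [|i r IH]; first by rewrite !big_nil proj0.
by rewrite !big_cons projD IH.
Qed.

Lemma proj_cont : continuous P.
Proof.
have -> : P = (fun x : V => \sum_(j < n) x 0 j *: P 'e_j).
  apply: funext => x; rewrite {1}(row_sum_delta x) proj_sum.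
  by apply: eq_bigr => j _; rewrite projZ.
apply: continuous_big; first exact: add_continuous.
move=> j _ x; apply: continuousZr_tmp.
exact: coord_continuous.
Qed.

End LA.

Section Main.
Variables (R : realType) (n : nat) (C S : set 'rV[R]_n).
Local Notation V := 'rV[R]_n.
Hypothesis convC : convex_set_rV C.
Hypothesis coneC : cone_rV C.
Hypothesis C0 : C 0.

Local Notation L := (lineality C).
Local Notation W := (perp L).
Local Notation P := (orth_proj W).
Local Notation S' := (closure (P @` S)).

Lemma Lin0 : L 0.
Proof. by move=> x t Cx; rewrite scaler0 addr0. Qed.
Lemma LinD x y : L x -> L y -> L (x + y).
Proof. by move=> Lx Ly z t Cz; rewrite scalerDr addrA; apply: Ly; apply: Lx. Qed.
Lemma LinZ (a : R) x : L x -> L (a *: x).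
Proof. by move=> Lx z t Cz; rewrite scalerA; apply: Lx. Qed.

Let pspec := @proj_spec _ _ _ Lin0 LinD LinZ.
Let puniq := @proj_uniq _ _ _ Lin0 LinD LinZ.
Let pW := @projW _ _ _ Lin0 LinD LinZ.
Let pD := @projD _ _ _ Lin0 LinD LinZ.
Let pZ := @projZ _ _ _ Lin0 LinD LinZ.
Let pB := @projB _ _ _ Lin0 LinD LinZ.
Let pcont := @proj_cont _ _ _ Lin0 LinD LinZ.

Lemma CP x : C x <-> C (P x).
Proof.
have [_ Lx] := pspec x; split => Cx.
  by have := Lx _ (-1) Cx; rewrite scaleN1r opprB addrCA subrr addr0.
by have := Lx _ 1 Cx; rewrite scale1r addrCA subrr addr0.
Qed.

Lemma trans_cont (c : V) : continuous (fun y : V => y + c).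
Proof.
move=> y.
have H1 : (fun z : V => z) x @[x --> y] --> y by exact: cvg_id.
have H2 : (fun=> c) x @[x --> y] --> c by apply: cvg_cst; exact: nbhs_filter.
have H := cvgD H1 H2. have H3 := H (nbhs_filter y). exact H3.
Qed.

Lemma freeA (K' : set V) : S_free_in W S' K' -> S_free S (P @^-1` K').
Proof.
move=> [KW [convK' K'free]]; split.
  move=> x y t Kx Ky t01 /=.
  by rewrite pD !pZ; apply: convK'.
apply/seteqP; split => // s [intK Ss].
have : (rel_interior W K' `&` S') (P s); last by rewrite K'free.
split; last by apply: subset_closure; exists s.
split; first by have [] := pspec s.
exists ((fun y => y + (s - P s)) @^-1` (P @^-1` K')); split.
  have E : P s + (s - P s) = s by rewrite addrCA subrr addr0.
  have := trans_cont (s - P s) (P s) (P @^-1` K'); rewrite /= E; exact.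
move=> y [/= Ky Wy]; move: Ky.
by rewrite pD pB (pW _ (pspec s).1) (pW _ Wy) subrr addr0.
Qed.

Definition Kpp (K : set V) := [set y | W y /\ forall l, L l -> K (y + l)].

Lemma freeB (K : set V) : S_free S K -> S_free_in W S' (Kpp K).
Proof.
move=> [convK Kfree]; split; first by move=> y [].
split.
  move=> y1 y2 t [W1 H1] [W2 H2] t01; split.
    by apply: WD; apply: WZ.
  move=> l Ll.
  have -> : t *: y1 + (1 - t) *: y2 + l = t *: (y1 + l) + (1 - t) *: (y2 + l).
    by rewrite !scalerDr addrACA -scalerDl (addrC t) subrK scale1r.
  by apply: convK => //; [apply: H1 | apply: H2].
apply/seteqP; split => // y [[Wy [N [nN NW]]] cl].
have [_ [[s Ss <-] intN]] := cl _ (nbhs_interior nN).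
have nK : nbhs s K.
  have := pcont s N intN; move=> H; apply: (@filterS _ _ (nbhs_filter s) _ _ _ H) => z /= Nz.
  have Wz : W (P z) by have [] := pspec z.
  have [_ HK] := NW _ (conj Nz Wz).
  have := HK _ (pspec z).2; by rewrite addrCA subrr addr0.
have : (interior K `&` S) s by [].
by rewrite Kfree.
Qed.


Lemma half_eq : (1 - 2^-1) * 2 = 1 :> R.
Proof. by rewrite mulrBl mul1r mulVf ?pnatr_eq0 // -addrA subrr addr0. Qed.

Lemma half_range : 0 <= (2^-1 : R) <= 1.
Proof. by rewrite invr_ge0 ler0n /= invf_le1 ?ler1n // ltr0n. Qed.

Lemma main_equiv : maximal_S_free S C <-> maximal_S_free_in W S' (C `&` W).
Proof.
have C'eq : C `&` W = Kpp C.
  apply/seteqP; split => y.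
    move=> [Cy Wy]; split => // l Ll; have := Ll y 1 Cy; by rewrite scale1r.
  move=> [Wy H]; split => //; have := H 0 Lin0; by rewrite addr0.
have Ceq : C = P @^-1` (C `&` W).
  apply/seteqP; split => x /=.
    by move=> Cx; split; [apply/(CP x).1 | have [] := pspec x].
  by move=> [/(CP x).2].
split.
  move=> [Cfree Cmax]; split; first by rewrite C'eq; apply: freeB.
  move=> K' K'free sub.
  have sub2 : C `<=` P @^-1` K'.
    by move=> x Cx; apply: sub; split; [exact/(CP x).1 | exact: (pspec x).1].
  have E := Cmax _ (@freeA K' K'free) sub2.
  apply/seteqP; split => // k K'k.
  have Wk : W k by apply: K'free.1.
  have : (P @^-1` K') k by rewrite /= pW.
  by rewrite E => Ck; split.
move=> [C'free C'max]; split; first by rewrite Ceq; exact: freeA.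
move=> K Kfree CK.
have sub : C `&` W `<=` Kpp K.
  move=> y [Cy Wy]; split => // l Ll; apply: CK; have := Ll y 1 Cy; by rewrite scale1r.
have E := C'max _ (@freeB K Kfree) sub.
apply/seteqP; split => // x Kx.
have half : forall l, L l -> K (2^-1 *: x + l).
  move=> l Ll.
  have Cl : C (2 *: l) by have := Ll 0 2 C0; rewrite add0r.
  have := Kfree.1 x (2 *: l) (2^-1) Kx (CK _ Cl) half_range.
  by rewrite scalerA half_eq scale1r.
have Pk : Kpp K (P (2^-1 *: x)).
  split; first exact: (pspec _).1.
  move=> l Ll.
  have -> : P (2^-1 *: x) + l = 2^-1 *: x + ((P (2^-1 *: x) - 2^-1 *: x) + l).
    by rewrite addrA addrCA subrr addr0.
  apply: half; apply: LinD => //.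
  by have := LinZ (-1) _ (pspec (2^-1 *: x)).2; rewrite scaleN1r opprB.
rewrite E in Pk; case: Pk => CPk _.
have Cx2 : C (2^-1 *: x) by apply/(CP _).2.
have := coneC _ _ Cx2 (ler0n R 2).
by rewrite scalerA mulfV ?pnatr_eq0 // scale1r.
Qed.

End Main.

Theorem theorem6 (R : realType) (n : nat) (C S : set 'rV[R]_n) :
  convex_set_rV C -> cone_rV C -> closed C -> interior C !=set0 ->
  closed S ->
  (maximal_S_free S C <->
   maximal_S_free_in (perp (lineality C))
     (closure (orth_proj (perp (lineality C)) @` S))
     (C `&` perp (lineality C))).
Proof.
move=> convC coneC _ [x0 ix0] _.
have C0 : C 0.
  by have := coneC x0 0 (nbhs_singleton ix0) (lexx 0); rewrite scale0r.
exact: main_equiv.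
Qed.
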